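(* Let $\hat W=\begin{pmatrix}\hat 1&\hat{\mathbf c}&\hat d\\0&\hat{\mathsf A}&\hat{\mathbf b}\\0&0&\hat 1\end{pmatrix}$ be a first degree iMPO in regular form. Then there exist a row vector $\mathbf t$ and a column vector $\mathbf s$ (of length $\chi$) such that, with $$L=\begin{pmatrix}1&\mathbf t&0\\0&\mathrm{Id}&\mathbf s\\0&0&1\end{pmatrix},\qquad \hat W'=L\hat WL^{-1},$$ the identity component of $\hat W'$ has the form $$W'_0=\langle\hat 1,\hat W'\rangle=\begin{pmatrix}1&0&d_0'\\0&A_0&0\\0&0&1\end{pmatrix}$$ for some number $d_0'$, where $A_0=\langle\hat 1,\hat{\mathsf A}\rangle$. Moreover the middle block of $\hat W'$ equals $\hat{\mathsf A}$.
   Context: $\mathcal A$ is the algebra of operators on $\mathbb C^q$ with inner product $\langle\hat A,\hat B\rangle=\mathrm{Tr}[\hat A^\dagger\hat B]/\mathrm{Tr}[\hat 1]$ and an orthonormal basis $\{\hat O_\alpha\}$ with $\hat O_0=\hat 1$; for a matrix with entries in $\mathcal A$, $\langle\hat 1,\cdot\rangle$ is taken entrywise, and $(W_\alpha)_{ab}=\langle\hat O_\alpha,\hat W_{ab}\rangle$. The transfer matrix of a square such matrix is $T_W=\sum_\alpha\overline{W_\alpha}\otimes W_\alpha$. An iMPO in regular form of bond dimension $\chi$ is a $(\chi+2)\times(\chi+2)$ matrix with entries in $\mathcal A$ of the displayed block form (block sizes $1,\chi,1$); it is first degree if every eigenvalue of $T_A$ (transfer matrix of $\hat{\mathsf A}$)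 has modulus $<1$. *)

(* Defs.v *)
From HB Require Import structures.
From mathcomp Require Import all_boot all_order all_algebra all_field.
From mathcomp Require Import mxtens.
Set Implicit Arguments. Unset Strict Implicit. Unset Printing Implicit Defensive.
Import Order.TTheory GRing.Theory Num.Theory.
Local Open Scope ring_scope.

Notation Op q := 'M[algC]_q.+1.

Definition opip (q : nat) (X Y : Op q) : algC :=
  \tr ((map_mx Num.conj X)^T *m Y) / (\tr (1 : Op q)).

(* orthonormal family indexed by 'I_q.+1 * 'I_q.+1 (i.e. q.+1^2 elements,
   hence an orthonormal basis), with O_0 = 1 at index (ord0, ord0). *)
Definition onb (q : nat) (O : 'I_q.+1 * 'I_q.+1 -> Op q) : Prop :=
  O (ord0, ord0) = 1 /\
  forall a b, opip (O a) (O b) = (a == b)%:R.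

Definition ocomp (q m n : nat) (Oa : Op q) (W : 'M[Op q]_(m, n)) : 'M[algC]_(m, n) :=
  map_mx (opip Oa) W.

Definition transfer (q n : nat) (O : 'I_q.+1 * 'I_q.+1 -> Op q)
  (W : 'M[Op q]_n) : 'M[algC]_(n * n) :=
  \sum_(a : 'I_q.+1 * 'I_q.+1) tensmx (map_mx Num.conj (ocomp (O a) W)) (ocomp (O a) W).

Definition first_degree (q n : nat) (O : 'I_q.+1 * 'I_q.+1 -> Op q)
  (A : 'M[Op q]_n) : Prop :=
  forall lam : algC, eigenvalue (transfer O A) lam -> `|lam| < 1.

Definition regular_impo (q chi : nat) (c : 'M[Op q]_(1, chi)) (d : 'M[Op q]_1)
  (A : 'M[Op q]_chi) (b : 'M[Op q]_(chi, 1)) : 'M[Op q]_(1 + chi + 1) :=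
  block_mx (block_mx 1 c 0 A) (col_mx d b) 0 1.

Definition gaugeL (chi : nat) (t : 'rV[algC]_chi) (s : 'cV[algC]_chi)
  : 'M[algC]_(1 + chi + 1) :=
  block_mx (block_mx 1 t 0 1) (col_mx 0 s) 0 1.

Definition scal_op (q n : nat) (M : 'M[algC]_n) : 'M[Op q]_n :=
  map_mx (fun a => a%:M) M.

Definition conjL (q chi : nat) (L : 'M[algC]_(1 + chi + 1))
  (W : 'M[Op q]_(1 + chi + 1)) : 'M[Op q]_(1 + chi + 1) :=
  scal_op q L *m W *m scal_op q (invmx L).

Definition mid_block (R : Type) (chi : nat) (W : 'M[R]_(1 + chi + 1)) : 'M[R]_chi :=
  drsubmx (ulsubmx W).

(* Main.v *)
Require Import Defs.
From HB Require Import structures.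
From mathcomp Require Import all_boot all_order all_algebra all_field.
From mathcomp Require Import mxtens.
From Stdlib Require Import FunctionalExtensionality.
From mathcomp Require Import ring.
Import Order.TTheory GRing.Theory Num.Theory.
Local Open Scope ring_scope.

Definition Zs (u : nat -> algC) : Prop :=
  forall e : algC, 0 < e -> exists N, forall n, (N <= n)%N -> `|u n| <= e.

Lemma bernoulli (h : algC) k : 0 <= h -> 1 + k%:R * h <= (1 + h) ^+ k.
Proof.
move=> h0; elim: k => [|k IH]; first by rewrite mul0r addr0 expr0.
rewrite exprS.
have h1 : 0 <= 1 + h by rewrite addr_ge0.
apply: le_trans (ler_wpM2l h1 IH).
have -> : (1 + h) * (1 + k%:R * h) = (1 + k.+1%:R * h) + h * (k%:R * h).
  by rewrite -natr1; ring.
by rewrite lerDl mulr_ge0 // mulr_ge0 // ler0n.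
Qed.

Lemma geo_small (r C e : algC) : 0 < r -> r < 1 -> 0 <= C -> 0 < e ->
  exists k, r ^+ k * C <= e.
Proof.
move=> r0 r1 C0 e0.
set h := r^-1 - 1.
have h0 : 0 < h by rewrite subr_gt0 invf_gt1.
have he0 : 0 < e * h by rewrite mulr_gt0.
have x0 : 0 <= C / (e * h) by rewrite divr_ge0 // ltW.
exists (Num.bound (C / (e * h))).
set k := Num.bound _.
have kb := archi_boundP x0; rewrite -/k in kb.
have rk0 : 0 < r ^+ k by rewrite exprn_gt0.
rewrite -ler_pdivlMl //.
have Hrk : (r ^+ k)^-1 = (1 + h) ^+ k by rewrite addrC subrK exprVn.
rewrite Hrk.
apply: le_trans; last exact: (ler_wpM2r (ltW e0) (@bernoulli h k (ltW h0))).
rewrite mulrDl mul1r.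
apply: (@le_trans _ _ (k%:R * h * e)); last by rewrite -subr_ge0 addrK ltW.
rewrite ltr_pdivrMr // in kb.
by rewrite -mulrA [h * e]mulrC ltW.
Qed.

Lemma decay_step (lam : algC) (u : nat -> algC) : `|lam| < 1 ->
  Zs (fun n => u n.+1 - lam * u n) -> Zs u.
Proof.
move=> l1 Hw e e0.
set rho := (1 + `|lam|) / 2.
have two0 : (0 : algC) < 2 by rewrite ltr0n.
have rho0 : 0 < rho by rewrite divr_gt0 // ltr_pwDl.
have rho1 : rho < 1.
  by rewrite ltr_pdivrMr // mul1r (_ : (2:algC) = 1 + 1) // ltrD2l.
have lr : `|lam| <= rho.
  by rewrite ler_pdivlMr // mulr_natr mulr2n lerD2r ltW.
set M := e / 2.
have M0 : 0 < M by rewrite divr_gt0.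
set delta := M * (1 - rho).
have d0 : 0 < delta by rewrite mulr_gt0 // subr_gt0.
have [N HN] := Hw delta d0.
have step : forall n, (N <= n)%N -> `|u n.+1| <= rho * `|u n| + delta.
  move=> n Nn.
  have -> : u n.+1 = (u n.+1 - lam * u n) + lam * u n by rewrite subrK.
  apply: le_trans (ler_normD _ _) _.
  rewrite addrC lerD ?HN // normrM ler_wpM2r //.
have claim : forall k, `|u (N + k)%N| - M <= rho ^+ k * `|u N|.
  elim=> [|k IH]; first by rewrite addn0 expr0 mul1r gerBl ltW.
  rewrite addnS.
  apply: le_trans (lerD (step _ (leq_addr k N)) (lexx (- M))) _.
  have -> : rho * `|u (N + k)%N| + delta - M = rho * (`|u (N + k)%N| - M).
    by rewrite /delta; ring.
  by rewrite exprS -mulrA ler_wpM2l // ltW.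
have [K HK] := @geo_small rho _ M rho0 rho1 (normr_ge0 (u N)) M0.
exists (N + K)%N => n NKn.
have -> : n = (N + (n - N))%N by rewrite subnKC // (leq_trans (leq_addr K N)).
have := claim (n - N)%N.
rewrite lerBlDr => H; apply: le_trans H _.
have -> : e = M + M.
  exact: splitr.
apply: lerD (lexx M); apply: le_trans HK.
rewrite ler_wpM2r // ler_wiXn2l // ?ltW //.
by rewrite leq_subRL ?(leq_trans (leq_addr K N)).
Qed.

Fixpoint applyD (rs : seq algC) (u : nat -> algC) : nat -> algC :=
  match rs with
  | [::] => u
  | r :: rs' => applyD rs' (fun n => u n.+1 - r * u n)
  end.

Lemma applyD_Zs rs : all (fun r => `|r| < 1) rs ->
  forall u, (forall n, applyD rs u n = 0) -> Zs u.
Proof.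
elim: rs => [|r rs IH] /= => [_ u Hu|/andP[r1 ar] u Hu].
  by move=> e e0; exists 0%N => n _; rewrite Hu normr0 ltW.
by apply: (@decay_step r u r1); apply: IH.
Qed.

Lemma applyD_mx k (T : 'M[algC]_k.+1) m p (X : 'M_(k.+1,p)) i j rs :
  forall (Y : 'M_(m,k.+1)),
  applyD rs (fun n => (Y *m T^+n *m X) i j) =
  fun n => (Y *m horner_mx T (\prod_(z <- rs) ('X - z%:P)) *m T^+n *m X) i j.
Proof.
elim: rs => [|r rs IH] Y /=.
  by rewrite big_nil rmorph1 mulmx1.
have -> : (fun n => (Y *m T ^+ n.+1 *m X) i j - r * (Y *m T ^+ n *m X) i j) =
   (fun n => (Y *m (T - r%:M) *m T ^+ n *m X) i j).
  apply: FunctionalExtensionality.functional_extensionality => n.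
  rewrite mulmxBr mulmxBl mulmxBl [RHS]mxE [X in _ = _ + X]mxE; congr (_ - _).
    by rewrite exprS -mulmxE mulmxA.
  by rewrite mul_mx_scalar -!scalemxAl [RHS]mxE.
rewrite IH big_cons rmorphM rmorphB /= horner_mx_X horner_mx_C.
by rewrite mulmxA.
Qed.

Lemma decay_mx k (T : 'M[algC]_k.+1) m p (Y : 'M_(m, k.+1)) (X : 'M_(k.+1, p)) i j :
  (forall l, eigenvalue T l -> `|l| < 1) -> Zs (fun n => (Y *m T^+n *m X) i j).
Proof.
move=> Hev.
have [rs Hrs] := closed_field_poly_normal (char_poly T).
have Hp : char_poly T = \prod_(z <- rs) ('X - z%:P).
  by rewrite {1}Hrs (monicP (char_poly_monic T)) scale1r.
apply: (@applyD_Zs rs).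
  apply/allP => r rin; apply: Hev.
  by rewrite eigenvalue_root_char Hp root_prod_XsubC.
move=> n; rewrite applyD_mx -Hp Cayley_Hamilton mulmx0 !mul0mx; exact: mxE.
Qed.

Lemma tens11 (a b : 'M[algC]_1) : (a *t b) 0 0 = a 0 0 * b 0 0.
Proof.
rewrite !mxE.
by case: (@mxtens_unindex 1 1 0) => i1 i2 /=; rewrite !ord1.
Qed.

Definition Ssum (chi : nat) (I : finType) (ws : I -> 'cV[algC]_chi) : 'M[algC]_(chi * chi, 1 * 1) :=
  \sum_i ((map_mx Num.conj (ws i)) *t (ws i)).

Definition vals (chi : nat) (r : 'rV[algC]_chi) (I : finType) (ws : I -> 'cV[algC]_chi) : algC :=
  \sum_i `|(r *m ws i) 0 0| ^+ 2.

Arguments Ssum {chi I}.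
Arguments vals {chi} r {I}.

Lemma phiS chi (r : 'rV[algC]_chi) (I : finType) (ws : I -> 'cV[algC]_chi) :
  ((map_mx Num.conj r *t r) *m Ssum ws) 0 0 = vals r ws.
Proof.
rewrite /Ssum /vals mulmx_sumr summxE; apply: eq_bigr => i _.
rewrite tensmx_mul -map_mxM tens11 mxE normCK mulrC //.
Qed.

Lemma TS q chi (O : 'I_q.+1 * 'I_q.+1 -> Op q) (A : 'M[Op q]_chi)
  (I : finType) (ws : I -> 'cV[algC]_chi) :
  transfer O A *m Ssum ws =
  Ssum (fun p : ('I_q.+1 * 'I_q.+1) * I => ocomp (O p.1) A *m ws p.2).
Proof.
rewrite /transfer /Ssum mulmx_suml.
under eq_bigr => a _ do rewrite mulmx_sumr.
rewrite pair_bigA /=; apply: eq_bigr => p _.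
by rewrite tensmx_mul map_mxM.
Qed.

Lemma valT q chi (O : 'I_q.+1 * 'I_q.+1 -> Op q) (A : 'M[Op q]_chi)
  (r : 'rV[algC]_chi) (I : finType) (ws : I -> 'cV[algC]_chi) :
  onb O -> r *m ocomp 1 A = r ->
  vals r ws <= vals r (fun p : ('I_q.+1 * 'I_q.+1) * I => ocomp (O p.1) A *m ws p.2).
Proof.
move=> [O0 _] rA.
rewrite /vals -(pair_bigA _ (fun a i => `|(r *m (ocomp (O a) A *m ws i)) 0 0| ^+ 2)) /=.
rewrite (bigD1 (ord0, ord0)) //= O0.
have -> : \sum_i `|(r *m (ocomp 1 A *m ws i)) 0 0| ^+ 2 = \sum_i `|(r *m ws i) 0 0| ^+ 2.
  by apply: eq_bigr => i _; rewrite mulmxA rA.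
rewrite lerDl; apply: sumr_ge0 => a _; apply: sumr_ge0 => i _.
exact: exprn_ge0.
Qed.

Lemma no_fixed_left q chi (O : 'I_q.+1 * 'I_q.+1 -> Op q) (A : 'M[Op q]_chi)
  (r : 'rV[algC]_chi) : onb O -> first_degree O A -> r *m ocomp 1 A = r -> r = 0.
Proof.
move=> Hon.
case: chi A r => [|m] A r Hfd rA; first by rewrite thinmx0.
set T := transfer O A.
set w := (map_mx Num.conj r)^T.
set R := map_mx Num.conj r *t r.
set z0 := Ssum (fun _ : 'I_1 => w).
set c := vals r (fun _ : 'I_1 => w).
have iter : forall n, exists (I : finType) (ws : I -> 'cV_m.+1),
    T ^+ n *m z0 = Ssum ws /\ c <= vals r ws.
  elim=> [|n [I [ws [E H]]]].
    by exists 'I_1, (fun _ => w); rewrite expr0 mul1mx.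
  exists _, (fun p : ('I_q.+1 * 'I_q.+1) * I => ocomp (O p.1) A *m ws p.2); split.
    by rewrite exprS -mulmxE -mulmxA E TS.
  exact: le_trans H (@valT _ _ O A r I ws Hon rA).
have Hz := @decay_mx _ T _ _ R z0 0 0 Hfd.
have c0 : 0 <= c by apply: sumr_ge0 => i _; exact: exprn_ge0.
have ceq : c = 0.
  apply/eqP/negPn/negP => cn0.
  have cp : 0 < c by rewrite lt_def cn0.
  have [N HN] := Hz (c / 2) (divr_gt0 cp (ltr0n _ 2)).
  have := HN N (leqnn N).
  have [I [ws [E H]]] := iter N.
  rewrite -mulmxA E (_ : (R *m Ssum ws) 0 0 = vals r ws); last exact: phiS.
  rewrite ger0_norm ?(le_trans c0 H) // => H2.
  have := le_trans H H2.
  rewrite ler_pdivlMr ?ltr0n // mulr_natr mulr2n gerDl => /(lt_le_trans cp); by rewrite ltxx.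
move: ceq; rewrite /c /vals big_ord1 => /eqP; rewrite expf_eq0 /= normr_eq0.
rewrite mxE => /eqP Hs.
have Hs' : \sum_j `|r 0 j| ^+ 2 = 0.
  rewrite -[in RHS]Hs; apply: eq_bigr => j _; by rewrite normCK !mxE.
have Hj := psumr_eq0P (fun j _ => exprn_ge0 2 (normr_ge0 (r 0 j))) Hs'.
apply/matrixP => i j; rewrite ord1 mxE.
by have /eqP := Hj j isT; rewrite expf_eq0 /= normr_eq0 => /eqP.
Qed.

Section G.
Variables (R : nzRingType) (chi : nat).
Definition Lg (t : 'rV[R]_chi) (s : 'cV[R]_chi) : 'M[R]_(1 + chi + 1) :=
  block_mx (block_mx 1 t 0 1) (col_mx 0 s) 0 1.
Definition Lginv (t : 'rV[R]_chi) (s : 'cV[R]_chi) : 'M[R]_(1 + chi + 1) :=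
  block_mx (block_mx 1 (-t) 0 1) (col_mx (t *m s) (-s)) 0 1.
Definition Wg (c : 'rV[R]_chi) (d : 'M[R]_1) (A : 'M[R]_chi) (b : 'cV[R]_chi)
  : 'M[R]_(1 + chi + 1) := block_mx (block_mx 1 c 0 A) (col_mx d b) 0 1.

Lemma LLinv t s : Lg t s *m Lginv t s = 1%:M.
Proof.
rewrite /Lg /Lginv mulmx_block.
rewrite !mulmx_block !mul_block_col.
rewrite !(mul1mx, mulmx1, mul0mx, mulmx0, addr0, add0r).
rewrite add_col_mx mulmxN subrr addNr add0r addNr col_mx0.
by rewrite -scalar_mx_block -scalar_mx_block.
Qed.

Lemma conjg_formula t s c d A b :
  Lg t s *m Wg c d A b *m Lginv t s =
  Wg (c + t *m A - t) (t *m s - c *m s - t *m A *m s + d + t *m b) A (b + s - A *m s).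
Proof.
rewrite /Lg /Lginv /Wg !mulmx_block !mul_block_col.
rewrite !(mul1mx, mulmx1, mul0mx, mulmx0, addr0, add0r).
rewrite !mulmx_block !mul_block_col !add_col_mx.
rewrite !(mul1mx, mulmx1, mul0mx, mulmx0, addr0, add0r, mulmxN).
congr (block_mx (block_mx _ _ _ _) (col_mx _ _) _ _).
- by rewrite addrC.
- by rewrite mulmxDl opprD !addrA.
- by rewrite addrC.
Qed.
End G.

Arguments Lg {R chi}.
Arguments Lginv {R chi}.
Arguments Wg {R chi}.

Notation fsc q := (fun a : algC => (a%:M : 'M[algC]_q.+1)).

Lemma opipD q (X Y Z : Op q) : opip X (Y + Z) = opip X Y + opip X Z.
Proof. by rewrite /opip mulmxDr mxtraceD mulrDl. Qed.

Lemma opip0 q (X : Op q) : opip X 0 = 0.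
Proof. by rewrite /opip mulmx0 mxtrace0 mul0r. Qed.

Lemma opipN q (X Y : Op q) : opip X (- Y) = - opip X Y.
Proof. by rewrite /opip mulmxN raddfN mulNr. Qed.

Lemma opip_sum q (X : Op q) (I : finType) (F : I -> Op q) :
  opip X (\sum_i F i) = \sum_i opip X (F i).
Proof. by apply: (big_morph (opip X)); [move=> x y; apply: opipD | apply: opip0]. Qed.

Lemma opip_scl q (X Y : Op q) a : opip X (a%:M * Y) = a * opip X Y.
Proof. by rewrite /opip -mulmxE mul_scalar_mx -scalemxAr mxtraceZ mulrA. Qed.

Lemma opip_scr q (X Y : Op q) a : opip X (Y * a%:M) = opip X Y * a.
Proof. by rewrite /opip -mulmxE mul_mx_scalar -scalemxAr mxtraceZ; ring. Qed.

Lemma opip1s q a : opip (1 : Op q) a%:M = a.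
Proof.
rewrite /opip map_mx1 trmx1 mul1mx !mxtrace_scalar -mulr_natr mulfK //.
by rewrite pnatr_eq0.
Qed.

Lemma ocompD q m n (X Y : 'M[Op q]_(m, n)) : ocomp 1 (X + Y) = ocomp 1 X + ocomp 1 Y.
Proof. by apply/matrixP => i j; rewrite !mxE opipD. Qed.

Lemma ocompN q m n (X : 'M[Op q]_(m, n)) : ocomp 1 (- X) = - ocomp 1 X.
Proof. by apply/matrixP => i j; rewrite !mxE opipN. Qed.

Lemma ocompB q m n (X Y : 'M[Op q]_(m, n)) : ocomp 1 (X - Y) = ocomp 1 X - ocomp 1 Y.
Proof. by rewrite ocompD ocompN. Qed.

Lemma ocomp_l q m n p (M : 'M[algC]_(m, n)) (X : 'M[Op q]_(n, p)) :
  ocomp 1 (map_mx (fsc q) M *m X) = M *m ocomp 1 X.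
Proof.
apply/matrixP => i j; rewrite !mxE opip_sum; apply: eq_bigr => k _.
by rewrite !mxE opip_scl.
Qed.

Lemma ocomp_r q m n p (M : 'M[algC]_(n, p)) (X : 'M[Op q]_(m, n)) :
  ocomp 1 (X *m map_mx (fsc q) M) = ocomp 1 X *m M.
Proof.
apply/matrixP => i j; rewrite !mxE opip_sum; apply: eq_bigr => k _.
by rewrite !mxE opip_scr.
Qed.

Lemma ocomp_s q m n (M : 'M[algC]_(m, n)) : ocomp 1 (map_mx (fsc q) M) = M.
Proof. by apply/matrixP => i j; rewrite !mxE opip1s. Qed.

Lemma ocomp0 q m n : ocomp 1 (0 : 'M[Op q]_(m, n)) = 0.
Proof. by apply/matrixP => i j; rewrite !mxE opip0. Qed.

Lemma ocomp1 q m : ocomp 1 (1 : 'M[Op q]_m) = 1.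
Proof.
apply/matrixP => i j; rewrite !mxE; case: (i == j) => /=.
  by rewrite (_ : 1 = 1%:M) // opip1s.
by rewrite opip0.
Qed.

Lemma scal_Lg q chi (t : 'rV[algC]_chi) s :
  scal_op q (Lg t s) = Lg (map_mx (fsc q) t) (map_mx (fsc q) s).
Proof.
by rewrite /scal_op /Lg !map_block_mx map_col_mx !map_mx1 !map_mx0.
Qed.

Lemma scal_Lginv q chi (t : 'rV[algC]_chi) s :
  scal_op q (Lginv t s) = Lginv (map_mx (fsc q) t) (map_mx (fsc q) s).
Proof.
by rewrite /scal_op /Lginv !map_block_mx map_col_mx !map_mx1 !map_mx0 !map_mxN map_mxM.
Qed.

Lemma invLg chi (t : 'rV[algC]_chi) s : invmx (Lg t s) = Lginv t s.
Proof.
have H := @LLinv _ _ t s.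
have [U _] := mulmx1_unit H.
by rewrite -[invmx _]mulmx1 -H mulmxA mulVmx // mul1mx.
Qed.

Theorem lemma4 (q chi : nat) (O : 'I_q.+1 * 'I_q.+1 -> 'M[algC]_q.+1)
  (c : 'M['M[algC]_q.+1]_(1, chi)) (d : 'M['M[algC]_q.+1]_1)
  (A : 'M['M[algC]_q.+1]_chi) (b : 'M['M[algC]_q.+1]_(chi, 1)) :
  onb O -> first_degree O A ->
  exists (t : 'rV[algC]_chi) (s : 'cV[algC]_chi),
    let W' := conjL (gaugeL t s) (regular_impo c d A b) in
    (exists d0' : algC,
       ocomp 1 W' =
       block_mx (block_mx 1 0 0 (ocomp 1 A)) (col_mx d0'%:M 0) 0 1)
    /\ mid_block W' = A.
Proof.
move=> Hon Hfd.
set A0 := ocomp 1 A.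
have U : (1 - A0) \in unitmx.
  rewrite unitmxE unitfE; apply/negP => /det0P [v vn0 Hv].
  have : v *m A0 = v.
    by move: Hv; rewrite mulmxBr mulmx1 => /eqP; rewrite subr_eq0 => /eqP <-.
  by move/(@no_fixed_left _ _ O A v Hon Hfd)/eqP; rewrite (negbTE vn0).
exists (ocomp 1 c *m invmx (1 - A0)), (- (invmx (1 - A0) *m ocomp 1 b)).
set t := ocomp 1 c *m _; set s := - _.
cbv zeta.
rewrite /conjL (_ : gaugeL t s = Lg t s) // (_ : regular_impo c d A b = Wg c d A b) //.
rewrite invLg scal_Lg scal_Lginv conjg_formula.
split; last by rewrite /mid_block /Wg block_mxKul block_mxKdr.
eexists.
rewrite /Wg /ocomp !map_block_mx map_col_mx -!/(ocomp _ _) ocomp0 !ocomp1.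
congr (block_mx (block_mx _ _ _ _) (col_mx _ _) _ _).
- rewrite ocompB ocompD ocomp_l ocomp_s -/A0.
  have Et : ocomp 1 c = t *m (1 - A0) by rewrite /t mulmxKV.
  by rewrite Et mulmxBr mulmx1 subrK subrr.
- exact: mx11_scalar.
- rewrite ocompB ocompD ocomp_r ocomp_s -/A0.
  have Es : (1 - A0) *m s = - ocomp 1 b by rewrite /s mulmxN mulKVmx.
  by rewrite -addrA -[s in s - _]mul1mx -mulmxBl Es subrr.
- exact: ocomp0.
Qed.
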